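(* Let $M$ be a connected matroid on $E$ and $S\subseteq E$ such that $M|_S$ is connected. Write $M/S=\bigoplus_i N_i$ where each $N_i$ is a connected matroid on a set $A_i$ (so the $A_i$ are the connected components of $M/S$). Then for each $i$, $M|_{A_i\cup S}$ is connected.
   Context: A matroid is connected if it is not a direct sum of two matroids on nonempty ground sets. $M|_S$ is the restriction to $S$ and $M/S$ is the contraction, the matroid on $E-S$ with $\mathrm{rk}_{M/S}(A)=\mathrm{rk}(A\cup S)-\mathrm{rk}(S)$. *)

(* Defs.v *)
(* Matroids on a finite ground set E : {set T}, given by a
   rank function rk : {set T} -> nat (only its values on subsets of E matter). *)
From mathcomp Require Import all_boot.
Set Implicit Arguments. Unset Strict Implicit. Unset Printing Implicit Defensive.

Section Matroid.
Variable T : finType.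

Definition is_matroid (E : {set T}) (rk : {set T} -> nat) : Prop :=
  [/\ forall X : {set T}, X \subset E -> rk X <= #|X|,
      forall X Y : {set T}, X \subset Y -> Y \subset E -> rk X <= rk Y &
      forall X Y : {set T}, X \subset E -> Y \subset E ->
        rk (X :|: Y) + rk (X :&: Y) <= rk X + rk Y].

Definition is_direct_sum (E : {set T}) (rk : {set T} -> nat) (A B : {set T}) : Prop :=
  [/\ A :|: B = E, [disjoint A & B] &
      forall X : {set T}, X \subset E -> rk X = rk (X :&: A) + rk (X :&: B)].

Definition connected (E : {set T}) (rk : {set T} -> nat) : Prop :=
  ~ exists A B : {set T}, [/\ A != set0, B != set0 & is_direct_sum E rk A B].

(* Restriction M|_S has ground set S and the same rank function.
   Contraction M/S has ground set E :\: S and rank function: *)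
Definition contr_rk (rk : {set T} -> nat) (S : {set T}) : {set T} -> nat :=
  fun X => rk (X :|: S) - rk S.

End Matroid.

(* Main.v *)
Require Import Defs.
From mathcomp Require Import all_boot.
From mathcomp Require Import zify.

Ltac memb x := repeat match goal with |- context[x \in ?B] => case: (x \in B) end.

Ltac sets F G :=
  let x := fresh "x" in
  first [apply/setP => x | apply/subsetP => x];
  move: (F x) (G x); rewrite ?inE; memb x; by [].

Lemma ds_sym (T : finType) (E A B : {set T}) rk :
  is_direct_sum E rk A B -> is_direct_sum E rk B A.
Proof.
case=> h1 h2 h3; split; [by rewrite setUC | by rewrite disjoint_sym |].
by move=> Z hZ; rewrite addnC; exact: h3.
Qed.

Lemma contr_split (T : finType) (E S : {set T}) rk (P : {set {set T}}) (A Z : {set T}) :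
  partition P (E :\: S) ->
  (forall X : {set T}, X \subset E :\: S ->
     contr_rk rk S X = \sum_(B in P) contr_rk rk S (X :&: B)) ->
  A \in P -> Z \subset E :\: S ->
  contr_rk rk S Z = contr_rk rk S (Z :&: A) + contr_rk rk S (Z :\: A).
Proof.
move=> /and3P[/eqP hcov htriv h0] h hA hZ.
have c0 : contr_rk rk S set0 = 0 by rewrite /contr_rk set0U subnn.
have dis : forall B, B \in P -> B != A -> A :&: B = set0.
  move=> B hB hBA; apply/eqP; rewrite setI_eq0.
  move/trivIsetP: htriv => ht; apply: ht => //; by rewrite eq_sym.
rewrite (h Z hZ) (h (Z :&: A)) ?(subset_trans (subsetIl _ _) hZ) //.
rewrite (h (Z :\: A)) ?(subset_trans (subsetDl _ _) hZ) //.
have e1 : Z :&: A :&: A = Z :&: A by rewrite -setIA setIid.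
have e2 : (Z :\: A) :&: A = set0.
  by apply/setP => x; rewrite !inE; memb x.
have s1 : \sum_(B in P) contr_rk rk S (Z :&: A :&: B) = contr_rk rk S (Z :&: A).
  rewrite (bigD1 A hA) /= e1 big1 ?addn0 //.
  move=> B /andP[hB hBA]; by rewrite -setIA dis // setI0 c0.
have s2 : \sum_(B in P) contr_rk rk S ((Z :\: A) :&: B) =
          \sum_(B in P | B != A) contr_rk rk S (Z :&: B).
  rewrite (bigD1 A hA) /= e2 c0 add0n.
  apply: eq_bigr => B /andP[hB hBA]; congr (contr_rk rk S _).
  have := dis B hB hBA; move/setP => hd; apply/setP => x; move: (hd x).
  rewrite !inE; memb x; by [].
by rewrite s1 s2 (bigD1 A hA).
Qed.

Lemma key (T : finType) (E S : {set T}) (rk : {set T} -> nat)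
  (P : {set {set T}}) (A X Y : {set T}) :
  is_matroid E rk -> connected E rk -> S \subset E ->
  partition P (E :\: S) ->
  (forall X : {set T}, X \subset E :\: S ->
     contr_rk rk S X = \sum_(A in P) contr_rk rk S (X :&: A)) ->
  A \in P -> is_direct_sum (A :|: S) rk X Y -> X != set0 -> Y != set0 ->
  S :&: Y = set0 -> False.
Proof.
move=> [hcard hmono hsub] hconn hSE hP hsum hA [hXY hdXY hds] hX0 hY0 hSY.
have hAsub : A \subset E :\: S.
  case/and3P: hP => /eqP <- _ _; exact: bigcup_sup.
have F : forall x, [&& (x \in S) ==> (x \in E), (x \in A) ==> (x \in E :\: S),
   ((x \in X) || (x \in Y)) == ((x \in A) || (x \in S)),
   ~~ ((x \in X) && (x \in Y)) & ~~ ((x \in S) && (x \in Y))].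
  move=> x; apply/and5P; split.
  - apply/implyP; exact: (subsetP hSE).
  - apply/implyP; exact: (subsetP hAsub).
  - by rewrite -!in_setU hXY eqxx.
  - have := hdXY; rewrite -setI_eq0 => /eqP/setP/(_ x); rewrite !inE => ->; done.
  - by move: hSY => /setP/(_ x); rewrite !inE => ->.
have r0 : rk set0 = 0.
  by have := hcard set0 (sub0set _); rewrite cards0; case: (rk set0).
apply: hconn; exists Y, (E :\: Y); split => //.
  case/set0Pn: hX0 => x hx; apply/set0Pn; exists x; move: (F x) hx; rewrite !inE.
  memb x; by [].
split.
- sets F F.
- rewrite -setI_eq0; apply/eqP; sets F F.
move=> Z hZ.
have G : forall x, (x \in Z) ==> (x \in E) by move=> x; apply/implyP; exact: (subsetP hZ x).
have -> : Z :&: (E :\: Y) = Z :\: Y by sets F G.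
have ha := (@contr_split T E S rk P A (Z :\: S) hP hsum hA) ltac:(sets F G).
have e1 : (Z :\: S) :|: S = Z :|: S by sets F G.
have e2 : ((Z :\: S) :&: A) :|: S = (Z :&: A) :|: S by sets F G.
have e3 : ((Z :\: S) :\: A) :|: S = (Z :\: A) :|: S by sets F G.
rewrite /contr_rk e1 e2 e3 in ha.
have m1 := hmono S (Z :|: S) (subsetUr _ _) ltac:(sets F G).
have m2 := hmono S ((Z :&: A) :|: S) (subsetUr _ _) ltac:(sets F G).
have m3 := hmono S ((Z :\: A) :|: S) (subsetUr _ _) ltac:(sets F G).
have hb := hds ((Z :&: A) :|: S) ltac:(sets F G).
have e4 : (Z :&: A :|: S) :&: X = (Z :&: A :&: X) :|: S by sets F G.
have e5 : (Z :&: A :|: S) :&: Y = Z :&: Y by sets F G.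
rewrite e4 e5 in hb.
have hc := hsub ((Z :&: A :&: X) :|: S) ((Z :\: A) :|: S) ltac:(sets F G) ltac:(sets F G).
have e6 : (Z :&: A :&: X :|: S) :|: (Z :\: A :|: S) = (Z :\: Y) :|: S by sets F G.
have e7 : (Z :&: A :&: X :|: S) :&: (Z :\: A :|: S) = S by sets F G.
rewrite e6 e7 in hc.
have hd := hsub Z ((Z :\: Y) :|: S) hZ ltac:(sets F G).
have e8 : Z :|: (Z :\: Y :|: S) = Z :|: S by sets F G.
have e9 : Z :&: (Z :\: Y :|: S) = Z :\: Y by sets F G.
rewrite e8 e9 in hd.
have he := hsub (Z :&: Y) (Z :\: Y) ltac:(sets F G) ltac:(sets F G).
have e10 : Z :&: Y :|: Z :\: Y = Z by sets F G.
have e11 : Z :&: Y :&: (Z :\: Y) = set0 by sets F G.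
rewrite e10 e11 r0 in he.
lia.
Qed.

Theorem lemma6p6 (T : finType) (E S : {set T}) (rk : {set T} -> nat)
  (P : {set {set T}}) :
  is_matroid E rk ->
  connected E rk ->
  S \subset E ->
  connected S rk ->
  partition P (E :\: S) ->
  (forall X : {set T}, X \subset E :\: S ->
     contr_rk rk S X = \sum_(A in P) contr_rk rk S (X :&: A)) ->
  (forall A : {set T}, A \in P -> connected A (contr_rk rk S)) ->
  forall A : {set T}, A \in P -> connected (A :|: S) rk.
Proof.
move=> hM hconn hSE hSc hP hsum hcomp A hA [X [Y [hX0 hY0 hds]]].
case: (boolP (S :&: Y == set0)) => [/eqP hSY|hSY].
  exact: (@key T E S rk P A X Y hM hconn hSE hP hsum hA hds hX0 hY0 hSY).
case: (boolP (S :&: X == set0)) => [/eqP hSX|hSX].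
  exact: (@key T E S rk P A Y X hM hconn hSE hP hsum hA (@ds_sym T _ _ _ rk hds) hY0 hX0 hSX).
apply: hSc; exists (S :&: X), (S :&: Y); split => //.
case: hds => [hXY hdXY hrk]; split.
- by rewrite -setIUr hXY; apply/setIidPl; exact: subsetUr.
- rewrite -setI_eq0; move: hdXY; rewrite -setI_eq0 => /eqP/setP h.
  apply/eqP/setP => x; move: (h x); rewrite !inE; memb x; by [].
- move=> Z hZ; rewrite hrk ?(subset_trans hZ (subsetUr A S)) //.
  by rewrite !setIA (setIidPl hZ).
Qed.
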